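(* Let $\mathbb{C}_1$ and $\mathbb{C}_2$ be locally small categories whose morphisms are all monomorphisms. Assume that for each $i\in\{1,2\}$ and all $A_i,B_i\in\mathrm{Ob}(\mathbb{C}_i)$ the set $\hom_{\mathbb{C}_i}(A_i,B_i)$ is finite and $t_{\mathbb{C}_i}(A_i)$ is finite. Then for all $A_1\in\mathrm{Ob}(\mathbb{C}_1)$ and $A_2\in\mathrm{Ob}(\mathbb{C}_2)$, $$t_{\mathbb{C}_1\times\mathbb{C}_2}(A_1,A_2)\le t_{\mathbb{C}_1}(A_1)\cdot t_{\mathbb{C}_2}(A_2),$$ and consequently $t^\sim_{\mathbb{C}_1\times\mathbb{C}_2}(A_1,A_2)\le t^\sim_{\mathbb{C}_1}(A_1)\cdot t^\sim_{\mathbb{C}_2}(A_2)$.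
   Context: $\mathbb{C}_1\times\mathbb{C}_2$ is the product category. For a category $\mathbb{C}$, $k\ge2$, $t\ge1$ and objects $A,B,C$: $C\to(B)^A_{k,t}$ means that for every $\chi:\hom(A,C)\to\{0,\dots,k-1\}$ there is $w\in\hom(B,C)$ with $|\chi(w\cdot\hom(A,B))|\le t$. $t_{\mathbb{C}}(A)$ is the least positive integer $n$ such that for all $k\ge2$ and all $B$ there is $C$ with $C\to(B)^A_{k,n}$, and $\infty$ if none exists. For $f,f'\in\hom(A,B)$ let $f\sim_A f'$ iff $f'=f\cdot\alpha$ for some $\alpha\in\mathrm{Aut}(A)$, $\binom{B}{A}=\hom(A,B)/{\sim_A}$, and $w\cdot(f/{\sim_A})=(w\cdot f)/{\sim_A}$. $C\overset{\sim}{\to}(B)^A_{k,t}$ means that for every $\chi:\binom{C}{A}\to\{0,\dots,k-1\}$ there is $w\in\hom(B,C)$ with $|\chi(w\cdot\binom{B}{A})|\le t$; $t^\sim_{\mathbb{C}}(A)$ is the least positive $n$ such that for all $k\ge2$ and all $B$ there is $C$ with $C\overset{\sim}{\to}(B)^A_{k,n}$, and $\infty$ otherwise. *)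

(* Defs.v *)
From Stdlib Require List.
From mathcomp Require Import all_boot.
Set Implicit Arguments. Unset Strict Implicit. Unset Printing Implicit Defensive.

Record category := Category {
  Ob : Type;
  Hom : Ob -> Ob -> Type;
  comp : forall A B C : Ob, Hom B C -> Hom A B -> Hom A C;
  idm : forall A : Ob, Hom A A;
  comp_assoc : forall (A B C D : Ob) (h : Hom C D) (g : Hom B C) (f : Hom A B),
      comp h (comp g f) = comp (comp h g) f;
  comp_id_l : forall (A B : Ob) (f : Hom A B), comp (idm B) f = f;
  comp_id_r : forall (A B : Ob) (f : Hom A B), comp f (idm A) = f
}.
Arguments comp {c A B C}.
Arguments idm {c}.

Definition all_mono (K : category) : Prop :=
  forall (A B D : Ob K) (h : Hom B D) (f g : Hom A B), comp h f = comp h g -> f = g.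

Definition finite_homs (K : category) : Prop :=
  forall A B : Ob K, exists s : list (Hom A B), forall f : Hom A B, List.In f s.

Section Prod.
Variables C1 C2 : category.
Definition prod_Hom (X Y : Ob C1 * Ob C2) : Type :=
  (Hom X.1 Y.1 * Hom X.2 Y.2)%type.
Definition prod_comp (X Y Z : Ob C1 * Ob C2) (g : prod_Hom Y Z) (f : prod_Hom X Y)
  : prod_Hom X Z := (comp g.1 f.1, comp g.2 f.2).
Definition prod_id (X : Ob C1 * Ob C2) : prod_Hom X X := (idm X.1, idm X.2).
Lemma prod_assoc (A B C D : Ob C1 * Ob C2) (h : prod_Hom C D) (g : prod_Hom B C)
  (f : prod_Hom A B) :
  prod_comp h (prod_comp g f) = prod_comp (prod_comp h g) f.
Proof. by rewrite /prod_comp /= !comp_assoc. Qed.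
Lemma prod_id_l (A B : Ob C1 * Ob C2) (f : prod_Hom A B) : prod_comp (prod_id B) f = f.
Proof. by case: f => f1 f2; rewrite /prod_comp /= !comp_id_l. Qed.
Lemma prod_id_r (A B : Ob C1 * Ob C2) (f : prod_Hom A B) : prod_comp f (prod_id A) = f.
Proof. by case: f => f1 f2; rewrite /prod_comp /= !comp_id_r. Qed.
Definition prod_cat : category :=
  @Category (Ob C1 * Ob C2)%type prod_Hom prod_comp prod_id prod_assoc prod_id_l prod_id_r.
End Prod.

Definition arrows (K : category) (C B A : Ob K) (k t : nat) : Prop :=
  forall chi : Hom A C -> 'I_k,
    exists w : Hom B C, exists S : {set 'I_k},
      #|S| <= t /\ forall f : Hom A B, chi (comp w f) \in S.

Definition ramsey_prop (K : category) (A : Ob K) (n : nat) : Prop :=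
  forall k, 2 <= k -> forall B : Ob K, exists C : Ob K, arrows C B A k n.

(* is_t K A n  <->  t_K(A) = n  (finite).  t_K(A) = oo  <-> no such n. *)
Definition is_t (K : category) (A : Ob K) (n : nat) : Prop :=
  0 < n /\ ramsey_prop A n /\ forall m, 0 < m -> ramsey_prop A m -> n <= m.

Definition is_aut (K : category) (A : Ob K) (a : Hom A A) : Prop :=
  exists b : Hom A A, comp a b = idm A /\ comp b a = idm A.

(* A colouring of binom(C,A) = hom(A,C)/~_A is represented by a colouring of
   hom(A,C) that is constant on ~_A-classes. *)
Definition aut_invariant (K : category) (A C : Ob K) (k : nat)
  (chi : Hom A C -> 'I_k) : Prop :=
  forall (f : Hom A C) (a : Hom A A), is_aut a -> chi (comp f a) = chi f.

Definition arrows_sim (K : category) (C B A : Ob K) (k t : nat) : Prop :=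
  forall chi : Hom A C -> 'I_k, aut_invariant chi ->
    exists w : Hom B C, exists S : {set 'I_k},
      #|S| <= t /\ forall f : Hom A B, chi (comp w f) \in S.

Definition ramsey_prop_sim (K : category) (A : Ob K) (n : nat) : Prop :=
  forall k, 2 <= k -> forall B : Ob K, exists C : Ob K, arrows_sim C B A k n.

Definition is_t_sim (K : category) (A : Ob K) (n : nat) : Prop :=
  0 < n /\ ramsey_prop_sim A n /\ forall m, 0 < m -> ramsey_prop_sim A m -> n <= m.

(* Main.v *)
From Stdlib Require Import Classical ClassicalEpsilon.
Require Import Defs.
From mathcomp Require Import all_boot.
Set Implicit Arguments. Unset Strict Implicit. Unset Printing Implicit Defensive.
Local Notation comp := Defs.comp.

Definition inv_T (K : category) (A C : Ob K) (T : Type) (chi : Hom A C -> T) : Prop :=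
  forall (f : Hom A C) (a : Hom A A), is_aut a -> chi (comp f a) = chi f.

Definition arrP (b : bool) (K : category) (C B A : Ob K) (T : finType) (t : nat) :=
  forall chi : Hom A C -> T, (b -> inv_T chi) ->
    exists w : Hom B C, exists S : {set T},
      #|S| <= t /\ forall f : Hom A B, chi (comp w f) \in S.

Definition rpT (b : bool) (K : category) (A : Ob K) (n : nat) :=
  forall T : finType, T -> forall B : Ob K, exists C : Ob K, arrP b C B A T n.

Lemma rp_rpT b (K : category) (A : Ob K) n :
  (forall k, 2 <= k -> forall B, exists C, arrP b C B A 'I_k n) -> rpT b A n.
Proof.
move=> H T x0 B.
have K2 : 2 <= #|T|.+2 by [].
case: (H _ K2 B) => C HC.
exists C => chi Hinv.
pose enc (t : T) : 'I_(#|T|.+2) := widen_ord (leqW (leqnSn _)) (enum_rank t).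
pose dec (i : 'I_(#|T|.+2)) : T :=
  match (insub (val i) : option 'I_#|T|) with Some j => enum_val j | None => x0 end.
have encK : cancel enc dec by move=> t; rewrite /dec /enc /= valK enum_rankK.
case: (HC (fun f => enc (chi f))) => [hb f a Ha|w [S [HS Hf]]].
  by rewrite /= (Hinv hb).
exists w, (dec @: S); split.
  exact: leq_trans (leq_imset_card _ _) HS.
by move=> f; rewrite -[chi _]encK; apply: imset_f; exact: Hf.
Qed.

Lemma In_tnth (T : Type) (s : seq T) x :
  List.In x s -> exists i : 'I_(size s), tnth (in_tuple s) i = x.
Proof.
move=> Hx.
have [j [Hj Hn]] : exists j, j < size s /\ nth x s j = x.
  elim: s Hx => //= y s IH [->|/IH [j [Hj Hn]]]; first by exists 0.
  by exists j.+1.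
by exists (Ordinal Hj); rewrite (tnth_nth x).
Qed.

Lemma aut_l (C1 C2 : category) (A1 : Ob C1) (A2 : Ob C2) (a : Hom A1 A1) :
  is_aut a -> @is_aut (prod_cat C1 C2) (A1, A2) (a, idm A2).
Proof.
case=> b [ab ba]; exists (b, idm A2).
by rewrite /= /prod_comp /= ab ba comp_id_l.
Qed.

Lemma aut_r (C1 C2 : category) (A1 : Ob C1) (A2 : Ob C2) (a : Hom A2 A2) :
  is_aut a -> @is_aut (prod_cat C1 C2) (A1, A2) (idm A1, a).
Proof.
case=> b [ab ba]; exists (idm A1, b).
by rewrite /= /prod_comp /= ab ba comp_id_l.
Qed.

Lemma prod_rp b (C1 C2 : category) (A1 : Ob C1) (A2 : Ob C2) n1 n2 :
  finite_homs C1 -> rpT b A1 n1 -> rpT b A2 n2 ->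
  forall k, 2 <= k -> forall B, exists C,
    @arrP b (prod_cat C1 C2) C B (A1, A2) 'I_k (n1 * n2).
Proof.
move=> F1 H1 H2 k k2 [B1 B2].
have o : 'I_k := Ordinal (ltnW k2).
have [C1' HC1] := H1 {ffun 'I_n2 -> 'I_k} [ffun=> o] B1.
have [s Hs] := F1 A1 C1'.
have [C2' HC2] := H2 {ffun 'I_(size s) -> 'I_k} [ffun=> o] B2.
exists (C1', C2') => chi Hinv.
pose chi2 (g : Hom A2 C2') :=
  [ffun i : 'I_(size s) => chi (tnth (in_tuple s) i, g)].
have chi2E : forall f g, exists i, chi (f, g) = chi2 g i.
  move=> f g; have [i Hi] := In_tnth (Hs f).
  by exists i; rewrite /chi2 ffunE Hi.
case: (HC2 chi2) => [hb g a Ha|w2 [S2 [HS2 Hg2]]].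
  apply/ffunP => i; rewrite !ffunE.
  have := Hinv hb (tnth (in_tuple s) i, g) (idm A1, a) (aut_r _ Ha).
  by rewrite /= /prod_comp /= comp_id_r.
pose sel (j : 'I_n2) := nth [ffun=> o] (enum S2) j.
have selP : forall t, t \in S2 -> exists j, sel j = t.
  move=> t Ht.
  have Hi : index t (enum S2) < n2.
    apply: leq_trans HS2; rewrite cardE index_mem mem_enum //.
  by exists (Ordinal Hi); rewrite /sel /= nth_index // mem_enum.
have pickP : forall j : 'I_n2, {g : option (Hom A2 B2) |
   match g with Some g => chi2 (comp w2 g) = sel j
              | None => forall g, chi2 (comp w2 g) <> sel j end}.
  move=> j; case: (excluded_middle_informative
     (exists g, chi2 (comp w2 g) = sel j)) => [/constructive_indefinite_description [g Hg]|Hn].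
    by exists (Some g).
  by exists None => g Hg; apply: Hn; exists g.
pose chi1 : Hom A1 C1' -> {ffun 'I_n2 -> 'I_k} := fun f => [ffun j : 'I_n2 =>
  match sval (pickP j) return 'I_k with Some g => chi (f, comp w2 g) | None => o end].
case: (HC1 chi1) => [hb f a Ha|w1 [S1 [HS1 Hf1]]].
  apply/ffunP => j; rewrite !ffunE.
  case: (sval (pickP j)) => // g.
  have := Hinv hb (f, comp w2 g) (a, idm A2) (aut_l _ Ha).
  by rewrite /= /prod_comp /= comp_id_r.
exists (w1, w2), ((fun (F : {ffun 'I_n2 -> 'I_k}) (j : 'I_n2) => F j) @2: (S1, [set: 'I_n2])).
split.
  rewrite curry_imset2X; apply: leq_trans (leq_imset_card _ _) _.
  by rewrite cardsX cardsT card_ord leq_mul.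
move=> [f g] /=.
have [j Hj] := selP _ (Hg2 g).
have E : chi1 (comp w1 f) j = chi (comp w1 f, comp w2 g).
  rewrite /chi1 ffunE.
  move: (proj2_sig (pickP j)); case: (sval (pickP j)) => [g'|] /= H.
    rewrite Hj in H.
    have [i Hi] := In_tnth (Hs (comp w1 f)).
    by have := congr1 (fun F : {ffun 'I_(size s) -> 'I_k} => F i) H; rewrite /chi2 !ffunE Hi.
  by case: (H g); rewrite Hj.
rewrite /prod_comp /= -E.
exact: (imset2_f (fun (F : {ffun 'I_n2 -> 'I_k}) (j : 'I_n2) => F j) (Hf1 f) (in_setT j)).
Qed.

Lemma minP (P : nat -> Prop) N : P N ->
  exists n, n <= N /\ P n /\ forall m, P m -> n <= m.
Proof.
suff: forall M n, n <= M -> P n -> exists n0, n0 <= n /\ P n0 /\ forall m, P m -> n0 <= m.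
  by move=> H HN; exact (H N N (leqnn N) HN).
elim=> [|M IH] n Hn Pn.
  exists n; split=> //; split=> // m _; by move: Hn; rewrite leqn0 => /eqP ->.
case: (classic (exists m, m < n /\ P m)) => [[m [Hm Pm]]|Hno].
  have [n0 [H0 [P0 M0]]] := IH m (leq_trans Hm Hn) Pm.
  exists n0; split=> //; exact: leq_trans H0 (ltnW Hm).
exists n; split=> //; split=> // m Pm; rewrite leqNgt; apply/negP => Hm.
by apply: Hno; exists m.
Qed.

Theorem theorem3p3 (C1 C2 : category) :
  all_mono C1 -> all_mono C2 ->
  finite_homs C1 -> finite_homs C2 ->
  (forall A : Ob C1, exists n, is_t A n) ->
  (forall A : Ob C2, exists n, is_t A n) ->
  forall (A1 : Ob C1) (A2 : Ob C2),
    (forall n1 n2, is_t A1 n1 -> is_t A2 n2 ->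
       exists n, @is_t (prod_cat C1 C2) (A1, A2) n /\ n <= n1 * n2) /\
    (forall n1 n2, is_t_sim A1 n1 -> is_t_sim A2 n2 ->
       exists n, @is_t_sim (prod_cat C1 C2) (A1, A2) n /\ n <= n1 * n2).
Proof.
move=> _ _ F1 _ _ _ A1 A2; split.
  move=> n1 n2 [p1 [r1 _]] [p2 [r2 _]].
  have R1 : rpT false A1 n1.
    apply: rp_rpT => k k2 B; have [C HC] := r1 k k2 B; exists C => chi _; exact: HC.
  have R2 : rpT false A2 n2.
    apply: rp_rpT => k k2 B; have [C HC] := r2 k k2 B; exists C => chi _; exact: HC.
  have R : @ramsey_prop (prod_cat C1 C2) (A1, A2) (n1 * n2).
    move=> k k2 B; have [C HC] := prod_rp F1 R1 R2 k2 B; exists C => chi; exact: HC.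
  have pp : 0 < n1 * n2 by rewrite muln_gt0 p1 p2.
  have [n [Hn [[pn Rn] Hmin]]] :=
    @minP (fun m => 0 < m /\ @ramsey_prop (prod_cat C1 C2) (A1, A2) m) (n1 * n2)
      (conj pp R).
  exists n; split=> //; split=> //; split=> // m pm Rm; exact: Hmin.
move=> n1 n2 [p1 [r1 _]] [p2 [r2 _]].
have R1 : rpT true A1 n1.
  apply: rp_rpT => k k2 B; have [C HC] := r1 k k2 B; exists C => chi Hi; exact: HC chi (Hi isT).
have R2 : rpT true A2 n2.
  apply: rp_rpT => k k2 B; have [C HC] := r2 k k2 B; exists C => chi Hi; exact: HC chi (Hi isT).
have R : @ramsey_prop_sim (prod_cat C1 C2) (A1, A2) (n1 * n2).
  move=> k k2 B; have [C HC] := prod_rp F1 R1 R2 k2 B; exists C => chi Hi.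
  by apply: HC.
have pp : 0 < n1 * n2 by rewrite muln_gt0 p1 p2.
have [n [Hn [[pn Rn] Hmin]]] :=
  @minP (fun m => 0 < m /\ @ramsey_prop_sim (prod_cat C1 C2) (A1, A2) m) (n1 * n2)
    (conj pp R).
exists n; split=> //; split=> //; split=> // m pm Rm; exact: Hmin.
Qed.
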